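(* Let $\mathcal{X}$ and $\mathcal{Y}$ be mm-spaces with $X$ and $Y$ finite sets, and let $p\geq1$. If $|X|=|Y|$ then $d_{\mathrm{GM},p}(\mathcal{X},\mathcal{Y})=d_{\mathrm{GM},p}(\mathcal{Y},\mathcal{X})$. If $|X|\neq|Y|$, then at least one of $d_{\mathrm{GM},p}(\mathcal{X},\mathcal{Y})$, $d_{\mathrm{GM},p}(\mathcal{Y},\mathcal{X})$ equals $\infty$, so that $d_{\mathrm{GM},p}(\mathcal{X},\mathcal{Y})=d_{\mathrm{GM},p}(\mathcal{Y},\mathcal{X})$ holds only when both equal $\infty$.
   Context: A metric measure space (mm-space) is a triple $\mathcal{X}=(X,d_X,\mu_X)$ where $(X,d_X)$ is a compact metric space and $\mu_X$ is a Borel probability measure on $X$ with full support. For mm-spaces $\mathcal{X},\mathcal{Y}$, let $\mathcal{T}(\mu_X,\mu_Y)$ be the set of measurable maps $\phi:X\to Y$ with $\phi_\#\mu_X=\mu_Y$. For $p\in[1,\infty)$, $$d_{\mathrm{GM},p}(\mathcal{X},\mathcal{Y})=\inf_{\phi\in\mathcal{T}(\mu_X,\mu_Y)}\left(\iint_{X\times X}\big|d_X(x,x')-d_Y(\phi(x),\phi(x'))\big|^p\,\mu_X(dx)\,\mu_X(dx')\right)^{1/p},$$ with $d_{\mathrm{GM},p}(\mathcal{X},\mathcal{Y})=\infty$ if $\mathcal{T}(\mu_X,\mu_Y)=\emptyset$. *)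

(* Defs.v *)
From Stdlib Require Import Reals.
From mathcomp Require Import all_boot.
Set Implicit Arguments.
Unset Strict Implicit.
Unset Printing Implicit Defensive.

Local Open Scope R_scope.

Definition rsum (T : finType) (f : T -> R) : R := \big[Rplus/0]_(x : T) f x.

(* Real power x^a for x >= 0 (with 0^a = 0 for a > 0). *)
Definition rpow (x a : R) : R := if Rlt_dec 0 x then Rpower x a else 0.

(* On a finite metric
   space the topology is discrete: compactness is automatic, every map is
   Borel measurable, and a probability measure is given by its point masses. *)
Record finMMSpace := FinMMSpace {
  mm_pt : finType;
  mm_d : mm_pt -> mm_pt -> R;
  mm_mu : mm_pt -> R;
  mm_d_nonneg : forall x y, 0 <= mm_d x y;
  mm_d_eq0 : forall x y, mm_d x y = 0 <-> x = y;
  mm_d_sym : forall x y, mm_d x y = mm_d y x;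
  mm_d_tri : forall x y z, mm_d x z <= mm_d x y + mm_d y z;
  mm_mu_pos : forall x, 0 < mm_mu x;   (* full support *)
  mm_mu_sum : rsum mm_mu = 1
}.

(* phi_# mu_X = mu_Y, checked on singletons (equivalent on a finite set). *)
Definition is_transport (X Y : finMMSpace) (phi : mm_pt X -> mm_pt Y) : Prop :=
  forall y : mm_pt Y,
    rsum (fun x : mm_pt X => if phi x == y then mm_mu x else 0) = mm_mu y.

Definition is_transportb (X Y : finMMSpace) (phi : mm_pt X -> mm_pt Y) : bool :=
  [forall y : mm_pt Y,
     if Req_EM_T (rsum (fun x : mm_pt X => if phi x == y then mm_mu x else 0))
                 (mm_mu y) then true else false].

Definition gm_cost (p : R) (X Y : finMMSpace) (phi : mm_pt X -> mm_pt Y) : R :=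
  rpow (rsum (fun x : mm_pt X => rsum (fun x' : mm_pt X =>
          rpow (Rabs (mm_d x x' - mm_d (phi x) (phi x'))) p
          * mm_mu x * mm_mu x')))
       (/ p).

(* d_{GM,p}(X,Y) as an extended real: None stands for +infinity.
   Since X, Y are finite, the set of maps is finite, so the infimum is the
   minimum over the finite list of transport maps. *)
Definition dGM (p : R) (X Y : finMMSpace) : option R :=
  match [seq @gm_cost p X Y (fun x => f x)
        | f : {ffun mm_pt X -> mm_pt Y} <- enum {ffun mm_pt X -> mm_pt Y}
        & @is_transportb X Y (fun x => f x)] with
  | [::] => None
  | c :: cs => Some (foldl Rmin c cs)
  end.

(* Main.v *)
Require Import Defs.
From Stdlib Require Import Reals.
From mathcomp Require Import all_boot.
From HB Require Import structures.
From Stdlib Require Import Lra.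

Set Implicit Arguments.
Unset Strict Implicit.
Local Open Scope R_scope.

HB.instance Definition _ := Monoid.isComLaw.Build R 0 Rplus
  (fun a b c => esym (Rplus_assoc a b c)) Rplus_comm Rplus_0_l.

Lemma transb_iff (X Y : finMMSpace) (f : mm_pt X -> mm_pt Y) :
  is_transportb f = true <-> is_transport f.
Proof.
rewrite /is_transportb /is_transport; split.
- move/forallP=> H y; move: (H y); by case: Req_EM_T.
- move=> H; apply/forallP=> y; by case: Req_EM_T.
Qed.

Lemma rsum0 (T : finType) (f : T -> R) : (forall x, f x = 0) -> rsum f = 0.
Proof.
move=> H; rewrite /rsum; apply: (big_ind (fun s => s = 0)) => //.
by move=> a b -> ->; rewrite Rplus_0_l.
Qed.

Lemma transport_surj (X Y : finMMSpace) (f : mm_pt X -> mm_pt Y) :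
  is_transport f -> forall y, exists x, f x == y.
Proof.
move=> H y; case: (pickP (fun x => f x == y)) => [x Hx|H0]; first by exists x.
have := H y; rewrite rsum0 => [E|x]; last by rewrite H0.
have := mm_mu_pos y; lra.
Qed.

Section Inv.
Variables (X Y : finMMSpace) (f : mm_pt X -> mm_pt Y).
Hypothesis Hf : is_transport f.

Definition rinv (y : mm_pt Y) : mm_pt X := xchoose (transport_surj Hf y).

Lemma rinvK : cancel rinv f.
Proof. by move=> y; apply/eqP; apply: (xchooseP (transport_surj Hf y)). Qed.

Lemma card_le : (#|mm_pt Y| <= #|mm_pt X|)%N.
Proof. exact: (@leq_card _ _ rinv (can_inj rinvK)). Qed.

Hypothesis Hc : #|mm_pt X| = #|mm_pt Y|.

Lemma finvK : cancel f rinv.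
Proof.
move=> x.
have: x \in codom rinv by apply: inj_card_onto; [exact: (can_inj rinvK)|rewrite Hc].
by case/codomP=> y ->; rewrite rinvK.
Qed.

Lemma mu_pres x : mm_mu (f x) = mm_mu x.
Proof.
rewrite -(Hf (f x)) /rsum (bigD1 x) //= eqxx.
rewrite (_ : \big[Rplus/0]_(i | true && (i != x)) _ = 0); first lra.
apply: (big_ind (fun s => s = 0)) => //; first by move=> a b -> ->; lra.
move=> i /= Hi; case: ifP => // /eqP E.
by move: Hi; rewrite -(finvK i) E finvK eqxx.
Qed.
End Inv.

Lemma gm_cost_ext p (X Y : finMMSpace) (f g : mm_pt X -> mm_pt Y) :
  (forall x, f x = g x) -> gm_cost p f = gm_cost p g.
Proof.
move=> H; rewrite /gm_cost /rsum; congr rpow.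
apply: eq_bigr => x _; apply: eq_bigr => x' _; by rewrite !H.
Qed.

Lemma transb_ext (X Y : finMMSpace) (f g : mm_pt X -> mm_pt Y) :
  (forall x, f x = g x) -> is_transportb f = is_transportb g.
Proof.
move=> H; rewrite /is_transportb; apply: eq_forallb => y.
by rewrite /rsum (eq_bigr (fun x => if g x == y then mm_mu x else 0)) // => x _; rewrite H.
Qed.

Lemma inverse_transport (X Y : finMMSpace) (f : mm_pt X -> mm_pt Y) (g : mm_pt Y -> mm_pt X) p :
  cancel f g -> cancel g f -> (forall x, mm_mu (f x) = mm_mu x) ->
  is_transport g /\ gm_cost p g = gm_cost p f.
Proof.
move=> fK gK mu; have bij : bijective f by exists g.
split.
- move=> x; rewrite /rsum (reindex f) /=; last by apply: onW_bij.
  rewrite (bigD1 x) //= fK eqxx mu.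
  rewrite (_ : \big[Rplus/0]_(i | true && (i != x)) _ = 0); first by lra.
  apply: (big_ind (fun s => s = 0)) => //; first by move=> a b -> ->; lra.
  by move=> i /= /negbTE Hi; rewrite fK Hi.
- rewrite /gm_cost /rsum; congr rpow.
  rewrite (reindex f) /=; last by apply: onW_bij.
  apply: eq_bigr => x _.
  rewrite (reindex f) /=; last by apply: onW_bij.
  apply: eq_bigr => x' _.
  by rewrite !fK !mu Rabs_minus_sym.
Qed.

Lemma In_map (A B : Type) (g : A -> B) (s : seq A) b :
  List.In b (map g s) <-> exists a, List.In a s /\ b = g a.
Proof.
elim: s => [|a s IH] /=; first by split=> // [[a []]].
split.
- case=> [<-|/IH [a' [H1 H2]]]; [by exists a; auto | by exists a'; auto].
- case=> a' [[<-|H1] H2]; [by left | right; apply/IH; exists a'; auto].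
Qed.

Lemma In_filter (A : Type) (P : pred A) (s : seq A) a :
  List.In a (filter P s) <-> List.In a s /\ P a.
Proof.
elim: s => [|x s IH] /=; first by split=> // [[]].
case: ifP => Px /=.
- rewrite IH; split; [case=> [<-|[]]; auto | case=> [[<-|H] Pa]; auto].
- rewrite IH; split; [case; auto | case=> [[<-|H] Pa]]; [by rewrite Pa in Px|auto].
Qed.

Lemma In_mem (T : eqType) (x : T) s : x \in s -> List.In x s.
Proof.
elim: s => //= a s IH; rewrite in_cons => /orP [/eqP ->|/IH]; auto.
Qed.

Lemma In_dGM_list p (X Y : finMMSpace) a :
  List.In a [seq @gm_cost p X Y (fun x => f x)
        | f : {ffun mm_pt X -> mm_pt Y} <- enum {ffun mm_pt X -> mm_pt Y}
        & @is_transportb X Y (fun x => f x)] <->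
  exists g : mm_pt X -> mm_pt Y, is_transport g /\ a = gm_cost p g.
Proof.
rewrite In_map; split.
- case=> f [/In_filter [_ /transb_iff H] ->]; by exists (fun x => f x).
- case=> g [H ->]; exists [ffun x => g x]; split.
  + apply/In_filter; split; first by apply: In_mem; rewrite mem_enum.
    have -> : is_transportb (fun x => [ffun x => g x] x) = is_transportb g.
      by apply: transb_ext => x; rewrite ffunE.
    by apply/transb_iff.
  + by apply: gm_cost_ext => x; rewrite ffunE.
Qed.

Lemma foldl_min c cs :
  List.In (foldl Rmin c cs) (c :: cs) /\
  forall z, List.In z (c :: cs) -> foldl Rmin c cs <= z.
Proof.
elim: cs c => [|d cs IH] c /=.
- split; first by left. by move=> z [<-|[]]; lra.
- have [H1 H2] := IH (Rmin c d); split.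
  + case: H1 => [<-|H]; last by auto.
    by rewrite /Rmin; case: Rle_dec; auto.
  + move=> z [<-|[<-|H]].
    * apply: Rle_trans (H2 _ (or_introl erefl)) _; apply: Rmin_l.
    * apply: Rle_trans (H2 _ (or_introl erefl)) _; apply: Rmin_r.
    * by apply: H2; right.
Qed.

Definition lmin (l : seq R) : option R :=
  match l with [::] => None | c :: cs => Some (foldl Rmin c cs) end.

Lemma lmin_eq (l1 l2 : seq R) :
  (forall a, List.In a l1 -> List.In a l2) -> (forall a, List.In a l2 -> List.In a l1) ->
  lmin l1 = lmin l2.
Proof.
case: l1 => [|c1 cs1]; case: l2 => [|c2 cs2] //= H1 H2.
- by case: (H2 c2); left.
- by case: (H1 c1); left.
- have [A1 B1] := foldl_min c1 cs1; have [A2 B2] := foldl_min c2 cs2.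
  congr Some; apply: Rle_antisym; [apply: B1; apply: H2 | apply: B2; apply: H1]; auto.
Qed.

Lemma dGM_None p (X Y : finMMSpace) :
  dGM p X Y = None <-> ~ exists g : mm_pt X -> mm_pt Y, is_transport g.
Proof.
have HL := (fun a => @In_dGM_list p X Y a); rewrite /dGM.
move: HL; case: [seq _ | _ <- _ & _] => [|c cs] HL.
- split; last by [].
  intros _ H; destruct H as [g Hg].
  have Hin : List.In (gm_cost p g) [::] by apply/HL; exists g.
  by [].
- split; first by [].
  intros H; exfalso.
  by case: (proj1 (HL c) (or_introl erefl)) => g [Hg _]; apply: H; exists g.
Qed.

Lemma sym_incl p (X Y : finMMSpace) : #|mm_pt X| = #|mm_pt Y| -> forall a,
  (exists g : mm_pt X -> mm_pt Y, is_transport g /\ a = gm_cost p g) ->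
  (exists g : mm_pt Y -> mm_pt X, is_transport g /\ a = gm_cost p g).
Proof.
move=> Hc a [g [Hg ->]].
have [T E] := inverse_transport p (finvK Hg Hc) (rinvK Hg) (mu_pres Hg Hc).
by exists (rinv Hg); split.
Qed.

Close Scope R_scope.

Theorem proposition2p3 (X Y : finMMSpace) (p : R) (hp : Rle 1 p) :
  (#|mm_pt X| = #|mm_pt Y| -> dGM p X Y = dGM p Y X) /\
  (#|mm_pt X| <> #|mm_pt Y| ->
     (dGM p X Y = None \/ dGM p Y X = None) /\
     (dGM p X Y = dGM p Y X <-> (dGM p X Y = None /\ dGM p Y X = None))).
Proof.
split.
- move=> Hc; rewrite /dGM; apply: lmin_eq => a.
  + by move/In_dGM_list=> H; apply/In_dGM_list; apply: sym_incl.
  + by move/In_dGM_list=> H; apply/In_dGM_list; apply: sym_incl.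
- move=> Hc.
  have H : dGM p X Y = None \/ dGM p Y X = None.
    case E1: (dGM p X Y) => [a|]; last by left.
    case E2: (dGM p Y X) => [b|]; last by right.
    exfalso; apply: Hc.
    have : ~ dGM p X Y = None by rewrite E1.
    move/dGM_None => H1.
    have : ~ dGM p Y X = None by rewrite E2.
    move/dGM_None => H2.
    have [g Hg] : exists g : mm_pt X -> mm_pt Y, is_transport g.
      by apply: Classical_Prop.NNPP.
    have [h Hh] : exists g : mm_pt Y -> mm_pt X, is_transport g.
      by apply: Classical_Prop.NNPP.
    by apply/eqP; rewrite eqn_leq (card_le Hg) (card_le Hh).
  split => //; split; last by case=> -> ->.
  by case: H => E; rewrite E => E'; split.
Qed.
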